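(* Let $\mathcal F$ be a saturated fusion system over a finite $p$-group $S$, $R$ a commutative ring with $1$, $H\le K\le S$, and $\mathcal H$, $\mathcal K$ fusion systems over $H$ and $K$ respectively with $\mathcal H\subseteq\mathcal K\subseteq\mathcal F$. Then: (1) the restriction functor $\downarrow^{\mathcal K}_{\mathcal H}$ maps $\operatorname{Mack}^{\mathcal F}_R(\mathcal K)$ into $\operatorname{Mack}^{\mathcal F}_R(\mathcal H)$; in particular $\downarrow^{\mathcal F}_{\mathcal H}$ maps $\operatorname{Mack}^c_R(\mathcal F)$ into $\operatorname{Mack}^{\mathcal F}_R(\mathcal H)$; (2) the induction functor $\uparrow^{\mathcal K}_{\mathcal H}$ maps $\operatorname{Mack}^{\mathcal F}_R(\mathcal H)$ into $\operatorname{Mack}^{\mathcal F}_R(\mathcal K)$; in particular $\uparrow^{\mathcal F}_{\mathcal H}$ maps $\operatorname{Mack}^{\mathcal F}_R(\mathcal H)$ into $\operatorname{Mack}^c_R(\mathcal F)$; (3) for every isomorphism $\varphi:H\to\varphi(H)$ in $\mathcal F$, the conjugation functor ${}^{\varphi}(\cdot)$ maps $\operatorname{Mack}^{\mathcal F}_R(\mathcal F_H(H))$ into $\operatorname{Mack}^{\mathcal F}_R(\mathcal F_{\varphi(H)}(\varphi(H)))$.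
   Context: Fusion systems over $S$: objects the subgroups of $S$, morphisms injective homomorphisms including all conjugations by elements of $S$, each morphism's isomorphism onto its image and its inverse belonging to the system; $\mathcal F$ saturated. $P\le S$ is $\mathcal F$-centric if $C_S(P')\le P'$ for all $P'$ isomorphic to $P$ in $\mathcal F$. $\mathcal F_H(H)$: fusion system over $H$ whose morphisms are conjugations by elements of $H$. Mackey algebra: for $A\le B\le S$, $R^B_A$, $I^B_A$ are the isomorphism classes of the bisets $(A\times B)/\Delta(A)$, $(B\times A)/\Delta(A)$, and for an isomorphism $\psi:A\to\psi(A)$ in $\mathcal F$, $c_\psi$ is the class of $(\psi(A)\times A)/\{(\psi(a),a)\}$; classes are multiplied via $\times_J$ over a common middle group ($0$ otherwise), $\mu_{\mathbb Z}(\mathcal F)$ is the Grothendieck group of the semiring (addition = disjoint union) they generate and $\mu_R(\mathcal F)=R\otimes\mu_{\mathbb Z}(\mathcal F)$. For a fusion system $\mathcal E\subseteq\mathcal F$ over $E\le S$, $\mu_R(\mathcal E)$ (built from $\mathcal E$) is a subring of $\mu_R(\mathcal F)$ with unit $1_{\mathcal E}=\sum_{A\le E}I^A_A$. A Mackey functor over $\mathcal E$ on $R$ is a finitely generated left $\mu_R(\mathcal E)$-module. For $\mathcal H\subseteq\mathcal K$: $M\downarrow^{\mathcal K}_{\mathcal H}=1_{\mathcal H}M$, $N\uparrow^{\mathcal K}_{\mathcal H}=\mu_R(\mathcal K)1_{\mathcal H}\otimes_{\mu_R(\mathcal H)}N$. $M$ over $\mathcal E$ is $\mathcal F$-centric if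 $I^A_AM=0$ for every $A\le E$ that is not $\mathcal F$-centric; $\operatorname{Mack}^{\mathcal F}_R(\mathcal E)$ denotes the full subcategory of these and $\operatorname{Mack}^c_R(\mathcal F)=\operatorname{Mack}^{\mathcal F}_R(\mathcal F)$. Conjugation functor: a group isomorphism $\varphi:H\to K'$ induces an $R$-algebra isomorphism $\hat\varphi:\mu_R(\mathcal F_H(H))\to\mu_R(\mathcal F_{K'}(K'))$ with $\hat\varphi(I^B_{hCh^{-1}}c_{c_h}R^A_C)=I^{\varphi(B)}_{\varphi(h)\varphi(C)\varphi(h)^{-1}}c_{c_{\varphi(h)}}R^{\varphi(A)}_{\varphi(C)}$ ($C\le A\le H$, $hCh^{-1}\le B\le H$). For a Mackey functor $L$ over $\mathcal F_H(H)$, ${}^{\varphi}L$ is the Mackey functor over $\mathcal F_{K'}(K')$ equal to $L$ as an $R$-module, with $y\cdot x:=\hat\varphi^{-1}(y)x$. *)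

(* Defs.v *)
From HB Require Import structures.
From mathcomp Require Import all_boot all_order all_algebra all_fingroup all_solvable.
Set Implicit Arguments. Unset Strict Implicit. Unset Printing Implicit Defensive.
Import GRing.Theory.
Local Open Scope group_scope.

(* Morphisms.  A morphism with domain P is encoded as a finite function
   gT -> gT which is 1 outside P (so that each homomorphism P -> S has a
   unique code); its codomain is not recorded.                          *)
Notation mor gT := {ffun gT -> gT} (only parsing).

Definition restr (gT : finGroupType) (P : {set gT}) (g : gT -> gT) : mor gT :=
  [ffun x => if x \in P then g x else 1].

(* c_g restricted to P : x |-> g x g^-1 *)
Definition cmap (gT : finGroupType) (P : {set gT}) (g : gT) : mor gT :=
  restr P (fun x => x ^ g^-1).

Definition minv (gT : finGroupType) (P : {set gT}) (f : mor gT) : mor gT :=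
  restr (f @: P) (fun y => odflt 1 [pick x in P | f x == y]).

Definition img (gT : finGroupType) (f : mor gT) (P : {set gT}) : {group gT} :=
  [group of <<f @: P>>].

Definition is_mor (gT : finGroupType) (E P : {set gT}) (f : mor gT) : Prop :=
  [/\ P \subset E, f = restr P f, {in P &, {morph f : x y / x * y}},
      {in P &, injective f} & f @: P \subset E].

(* A (candidate) fusion system: F P f <-> f is a morphism of F with domain P. *)
Definition fsys (gT : finGroupType) := {group gT} -> mor gT -> bool.

Definition fusion_system (gT : finGroupType) (E : {group gT}) (F : fsys gT) : Prop :=
  [/\ (forall P f, F P f -> is_mor E P f),
      (forall (P : {group gT}) g, P \subset E -> g \in E -> F P (cmap P g)),
      (forall P f, F P f -> F (img f P) (minv P f)) &
      (forall (P Q : {group gT}) f g, F P f -> F Q g -> f @: P \subset Q ->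
          F P (restr P (g \o f)))].

Definition subfs (gT : finGroupType) (F1 F2 : fsys gT) : Prop :=
  forall P f, F1 P f -> F2 P f.

Definition group_fs (gT : finGroupType) (H : {group gT}) : fsys gT :=
  fun P f => (P \subset H) && [exists h in H, f == cmap P h].

Definition AutF (gT : finGroupType) (F : fsys gT) (P : {group gT}) : {set mor gT} :=
  [set f | F P f & f @: P == P].

Definition AutS (gT : finGroupType) (S P : {group gT}) : {set mor gT} :=
  [set cmap P g | g in 'N_S(P)].

(* Aut_S(P) is a Sylow p-subgroup of Aut_F(P) (index prime to p) *)
Definition fully_automized (gT : finGroupType) (p : nat) (S : {group gT})
    (F : fsys gT) (P : {group gT}) : bool :=
  ~~ (p %| #|AutF F P| %/ #|AutS S P|).

Definition Nphi (gT : finGroupType) (S P : {group gT}) (f : mor gT) : {group gT} :=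
  <<[set g in 'N_S(P) |
      restr (img f P) (f \o (fun x => x ^ g^-1) \o minv P f) \in AutS S (img f P)]>>%G.

Definition receptive (gT : finGroupType) (S : {group gT}) (F : fsys gT) (Q : {group gT}) :
    Prop :=
  forall (P : {group gT}) f, F P f -> f @: P = Q :> {set gT} ->
    exists g, F (Nphi S P f) g /\ {in P, g =1 f}.

Definition saturated (gT : finGroupType) (p : nat) (S : {group gT}) (F : fsys gT) : Prop :=
  forall P : {group gT}, P \subset S ->
    exists (Q : {group gT}) f,
      [/\ F P f, f @: P = Q :> {set gT}, fully_automized p S F Q & receptive S F Q].

Definition centric (gT : finGroupType) (S : {group gT}) (F : fsys gT) (P : {group gT}) : Prop :=
  forall f, F P f -> 'C_S(f @: P) \subset f @: P.

Local Open Scope ring_scope.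

(* A transitive (B,A)-biset (B x A)/L is recorded as the triple (B, A, L),
   L a canonical representative of its (B x A)-conjugacy class.          *)
Definition btype (gT : finGroupType) :=
  ({group gT} * {group gT} * {group (gT * gT)})%type.

Definition diagm (gT : finGroupType) (C : {set gT}) (f : gT -> gT) : {set gT * gT} :=
  [set (f c, c) | c in C].

Definition canon (gT : finGroupType) (B A : {set gT}) (L : {group (gT * gT)}) :
    {group (gT * gT)} :=
  [arg min_(M < L | [exists x in setX B A, M == (L :^ x)%G]) enum_rank M].

(* basis elements of mu(E), E a fusion system over the group E0:
   classes of I^B_{psi(C)} c_psi R^A_C *)
Definition is_basis (gT : finGroupType) (E : fsys gT) (E0 : {group gT}) (t : btype gT) : Prop :=
  let: (B, A, L) := t in
  [/\ B \subset E0, A \subset E0, L = canon B A L &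
      exists (C : {group gT}) f,
        [/\ C \subset A, E C f, f @: C \subset B & L = diagm C f :> {set _}]].

(* R (x) (Grothendieck group): R-valued coefficient functions on classes *)
Notation mu gT R := {ffun btype gT -> R} (only parsing).

Definition in_mu (gT : finGroupType) (R : pzRingType) (E : fsys gT) (E0 : {group gT})
    (x : mu gT R) : Prop :=
  forall t, x t != 0 -> is_basis E E0 t.

Definition bvec (gT : finGroupType) (R : pzRingType) (t : btype gT) : mu gT R :=
  [ffun u => (u == t)%:R].

Definition bcls (gT : finGroupType) (R : pzRingType) (B A : {group gT})
    (L : {group (gT * gT)}) : mu gT R :=
  bvec R (B, A, canon B A L).

Definition Iaa (gT : finGroupType) (R : pzRingType) (A : {group gT}) : mu gT R :=
  bcls R A A [group of <<diagm A id>>].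

Definition unitmu (gT : finGroupType) (R : pzRingType) (E0 : {group gT}) : mu gT R :=
  \sum_(A : {group gT} | A \subset E0) Iaa R A.

Definition bstar (gT : finGroupType) (L M : {set gT * gT}) : {set gT * gT} :=
  [set u | [exists j, ((u.1, j) \in L) && ((j, u.2) \in M)]].
Definition pr1s (gT : finGroupType) (L : {set gT * gT}) : {set gT} := [set u.1 | u in L].
Definition pr2s (gT : finGroupType) (L : {set gT * gT}) : {set gT} := [set u.2 | u in L].

(* product of basis bisets (Mackey formula):
   (B x J)/L  x_J  (J x A)/M = sum_{t in p2(L)\J/p1(M)} (B x A)/(L * ^(t,1)M) *)
Definition mulb (gT : finGroupType) (R : pzRingType) (t u : btype gT) : mu gT R :=
  let: (B, J, L) := t in
  let: (J', A, M) := u in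
  if J == J' then
    \sum_(D in [set ((pr2s L :* j) * pr1s M)%g | j in J])
        bcls R B A [group of <<bstar L (M :^ (((repr D)^-1, 1) : gT * gT))%g>>]
  else 0.

Definition mulmu (gT : finGroupType) (R : pzRingType) (x y : mu gT R) : mu gT R :=
  \sum_(t : btype gT) \sum_(u : btype gT) [ffun v => x t * y u * mulb R t u v].

(* ---- Mackey functors = f.g. left mu_R(E)-modules ------------------- *)
Definition mack_module (gT : finGroupType) (R : pzRingType) (E : fsys gT) (E0 : {group gT})
    (M : zmodType) (act : mu gT R -> M -> M) : Prop :=
  [/\ (forall x y m, in_mu E E0 x -> in_mu E E0 y -> act (x + y) m = act x m + act y m),
      (forall x m m', in_mu E E0 x -> act x (m + m') = act x m + act x m'),
      (forall m, act (unitmu R E0) m = m),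
      (forall x y m, in_mu E E0 x -> in_mu E E0 y -> act (mulmu x y) m = act x (act y m)) &
      (exists n (g : 'I_n -> M), forall m, exists c : 'I_n -> mu gT R,
          (forall i, in_mu E E0 (c i)) /\ m = \sum_(i < n) act (c i) (g i))].

Definition mcentric (gT : finGroupType) (R : pzRingType) (S : {group gT}) (F : fsys gT)
    (E0 : {group gT}) (M : zmodType) (act : mu gT R -> M -> M) : Prop :=
  forall A : {group gT}, A \subset E0 -> ~ centric S F A -> forall m, act (Iaa R A) m = 0.

(* ---- induction: mu(K) 1_H (x)_{mu(H)} N, by its universal property -- *)
Definition in_mu1 (gT : finGroupType) (R : pzRingType) (FK : fsys gT) (K H : {group gT})
    (y : mu gT R) : Prop :=
  in_mu FK K y /\ exists x, in_mu FK K x /\ y = mulmu x (unitmu R H).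

Definition balanced (gT : finGroupType) (R : pzRingType) (FK FH : fsys gT) (K H : {group gT})
    (N : zmodType) (actN : mu gT R -> N -> N) (U : zmodType) (g : mu gT R -> N -> U) : Prop :=
  [/\ (forall y y' n, in_mu1 FK K H y -> in_mu1 FK K H y' -> g (y + y') n = g y n + g y' n),
      (forall y n n', in_mu1 FK K H y -> g y (n + n') = g y n + g y n') &
      (forall y z n, in_mu1 FK K H y -> in_mu FH H z -> g (mulmu y z) n = g y (actN z n))].

Definition is_tensor (gT : finGroupType) (R : pzRingType) (FK FH : fsys gT) (K H : {group gT})
    (N : zmodType) (actN : mu gT R -> N -> N) (T : zmodType) (beta : mu gT R -> N -> T) : Prop :=
  balanced FK FH K H actN beta /\
  forall (U : zmodType) (g : mu gT R -> N -> U), balanced FK FH K H actN g ->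
    exists h : T -> U,
      [/\ {morph h : a b / a + b},
          (forall y n, in_mu1 FK K H y -> h (beta y n) = g y n) &
          (forall h' : T -> U, {morph h' : a b / a + b} ->
             (forall y n, in_mu1 FK K H y -> h' (beta y n) = g y n) -> h' =1 h)].

Definition induced_act (gT : finGroupType) (R : pzRingType) (FK : fsys gT) (K H : {group gT})
    (N : zmodType) (T : zmodType) (beta : mu gT R -> N -> T) (actT : mu gT R -> T -> T) : Prop :=
  (forall x t t', in_mu FK K x -> actT x (t + t') = actT x t + actT x t') /\
  (forall x y n, in_mu FK K x -> in_mu1 FK K H y -> actT x (beta y n) = beta (mulmu x y) n).

Definition imgL (gT : finGroupType) (f : mor gT) (L : {set gT * gT}) : {group (gT * gT)} :=
  [group of <<[set ((f u.1, f u.2) : gT * gT) | u in L]>>].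

Definition transport (gT : finGroupType) (R : pzRingType) (f : mor gT) (x : mu gT R) : mu gT R :=
  \sum_(t : btype gT) [ffun v => x t * bcls R (img f t.1.1) (img f t.1.2) (imgL f t.2) v].

(* ^phi L : y . m := hat(phi)^{-1}(y) m, and hat(phi)^{-1} = hat(phi^{-1}) *)
Definition conj_act (gT : finGroupType) (R : pzRingType) (H : {group gT}) (phi : mor gT)
    (M : zmodType) (act : mu gT R -> M -> M) : mu gT R -> M -> M :=
  fun y m => act (transport (minv H phi) y) m.

(* Main.v *)
Require Import Defs.
From HB Require Import structures.
From mathcomp Require Import all_boot all_order all_algebra all_fingroup all_solvable.
Local Open Scope group_scope.

Module Helpers.
Set Implicit Arguments. Unset Strict Implicit. Unset Printing Implicit Defensive.
Import GRing.Theory.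
Section X.
Variable gT : finGroupType.
Implicit Types B A : {group gT}.

Lemma conjG_eq (L : {group gT * gT}) x y : ((L :^ x) :^ y)%G = (L :^ (x * y))%G.
Proof. by apply: val_inj; rewrite /= conjsgM. Qed.

Lemma conjG1' (L : {group gT * gT}) : (L :^ 1)%G = L.
Proof. by apply: val_inj; rewrite /= conjsg1. Qed.

Lemma canon_uniq B A (L1 L2 : {group gT * gT}) y :
  y \in setX B A -> L2 = (L1 :^ y)%G -> canon B A L2 = canon B A L1.
Proof.
move=> Hy ->.
set P1 := fun M : {group gT * gT} => [exists x in setX B A, M == (L1 :^ x)%G].
set P2 := fun M : {group gT * gT} => [exists x in setX B A, M == ((L1 :^ y) :^ x)%G].
have EP : forall M, P2 M = P1 M.
  move=> M; apply/existsP/existsP => -[x /andP[Hx /eqP ->]].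
    by exists (y * x); rewrite groupM //= conjG_eq eqxx.
  exists (y^-1 * x); rewrite groupM ?groupV //= conjG_eq mulgA mulgV mul1g eqxx.
  by [].
rewrite /canon.
case: arg_minnP => [|M2 PM2 min2].
  by apply/existsP; exists 1; rewrite group1 /= conjG1'.
case: arg_minnP => [|M1 PM1 min1].
  by apply/existsP; exists 1; rewrite group1 /= conjG1'.
apply: enum_rank_inj; apply: val_inj; apply/eqP; rewrite eqn_leq.
apply/andP; split; [apply: min2 | apply: min1].
- by rewrite /= -/(P2 M1) EP.
- by move: PM2; rewrite /= -/(P2 M2) EP.
Qed.

Lemma canon_conj B A (L : {group gT * gT}) :
  exists2 x, x \in setX B A & canon B A L = (L :^ x)%G.
Proof.
rewrite /canon; case: arg_minnP => [|M /existsP[x /andP[Hx /eqP ->]] _].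
  by apply/existsP; exists 1; rewrite group1 /= conjG1'.
by exists x.
Qed.

Lemma canon_id B A (L : {group gT * gT}) : canon B A (canon B A L) = canon B A L.
Proof. by case: (canon_conj B A L) => x Hx E; rewrite {1}E (canon_uniq Hx (erefl _)). Qed.
Lemma conjg_pair (x1 x2 y1 y2 : gT) : ((x1, x2) ^ (y1, y2) : gT * gT) = (x1 ^ y1, x2 ^ y2).
Proof. by []. Qed.
Lemma invg_pair (y1 y2 : gT) : ((y1, y2)^-1 : gT * gT) = (y1^-1, y2^-1).
Proof. by []. Qed.

Lemma mem_conj_pair (L : {set gT * gT}) (x1 x2 y1 y2 : gT) :
  ((x1, x2) \in L :^ (y1, y2)) = ((x1 ^ y1^-1, x2 ^ y2^-1) \in L).
Proof. by rewrite mem_conjg. Qed.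

Lemma mem_diag (J : {set gT}) x z : ((x, z) \in diagm J id) = (x == z) && (z \in J).
Proof.
apply/imsetP/andP => [[c Hc [-> ->]] | [/eqP -> Hz]]; first by [].
by exists z.
Qed.

Lemma mem_bstar (L M : {set gT * gT}) x z :
  ((x, z) \in bstar L M) = [exists j, ((x, j) \in L) && ((j, z) \in M)].
Proof. by rewrite inE. Qed.

Lemma bstar_diagr (J : {group gT}) (L : {set gT * gT}) a b :
  a \in J -> pr2s L \subset J ->
  bstar L (diagm J id :^ (a, b)) = L :^ (1, a^-1 * b).
Proof.
move=> Ha sL; apply/setP => -[x z].
rewrite mem_bstar mem_conj_pair invg1 conjg1; apply/existsP/idP.
  case=> j /andP[Lxj]; rewrite mem_conj_pair mem_diag => /andP[/eqP E Hj].
  suff -> : z ^ (a^-1 * b)^-1 = j by [].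
  rewrite invMg invgK conjgM -E -conjgM mulVg conjg1 //.
move=> Lxz; exists (z ^ (a^-1 * b)^-1); rewrite Lxz /= mem_conj_pair mem_diag.
have Hj : z ^ (a^-1 * b)^-1 \in J.
  by apply: (subsetP sL); apply/imsetP; exists (x, z ^ (a^-1 * b)^-1).
rewrite invMg invgK -conjgM -mulgA mulgV mulg1 eqxx /=.
have -> : z ^ b^-1 = (z ^ (a^-1 * b)^-1) ^ a^-1.
  by rewrite -conjgM invMg invgK -mulgA mulgV mulg1.
by rewrite groupJ ?groupV.
Qed.

Lemma bstar_diagl (J : {group gT}) (M : {set gT * gT}) a b :
  b \in J -> pr1s M \subset J ->
  bstar (diagm J id :^ (a, b)) M = M :^ (b^-1 * a, 1).
Proof.
move=> Hb sM; apply/setP => -[x z].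
rewrite mem_bstar mem_conj_pair invg1 conjg1; apply/existsP/idP.
  case=> j /andP[]; rewrite mem_conj_pair mem_diag => /andP[/eqP E Hj] Mjz.
  suff -> : x ^ (b^-1 * a)^-1 = j by [].
  by rewrite invMg invgK conjgM E -conjgM mulVg conjg1.
move=> Mxz; exists (x ^ (b^-1 * a)^-1); rewrite Mxz andbT mem_conj_pair mem_diag.
have Hj : x ^ (b^-1 * a)^-1 \in J.
  by apply: (subsetP sM); apply/imsetP; exists (x ^ (b^-1 * a)^-1, z).
rewrite -conjgM invMg invgK -mulgA mulgV mulg1 eqxx /=.
have -> : x ^ a^-1 = (x ^ (b^-1 * a)^-1) ^ b^-1.
  by rewrite -conjgM invMg invgK -mulgA mulgV mulg1.
by rewrite groupJ ?groupV.
Qed.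

Lemma diag_group (J : {group gT}) : group_set (diagm J id).
Proof.
apply/group_setP; split; first by apply/imsetP; exists 1.
move=> [x1 x2] [y1 y2]; rewrite !mem_diag => /andP[/eqP -> H1] /andP[/eqP -> H2].
by rewrite /= eqxx groupM. Qed.

Lemma gen_diag (J : {group gT}) : <<diagm J id>> = diagm J id.
Proof. exact: gen_set_id (diag_group J). Qed.

Lemma conjg_fst (u y : gT * gT) : (u ^ y).1 = u.1 ^ y.1.
Proof. by case: u; case: y. Qed.
Lemma conjg_snd (u y : gT * gT) : (u ^ y).2 = u.2 ^ y.2.
Proof. by case: u; case: y. Qed.

Lemma pr1s_conj (L : {set gT * gT}) y : pr1s (L :^ y) = pr1s L :^ y.1.
Proof.
apply/setP => x; apply/imsetP/idP => [[u Hu ->] | Hx].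
  rewrite mem_conjg; apply/imsetP; exists (u ^ y^-1); first by rewrite -mem_conjg.
  by rewrite conjg_fst; case: y {Hu}.
move: Hx; rewrite mem_conjg => /imsetP[w Hw Ex]; exists (w ^ y); first by rewrite memJ_conjg.
by rewrite conjg_fst -Ex; case: y {Ex} => y1 y2 /=; rewrite conjgKV.
Qed.

Lemma pr2s_conj (L : {set gT * gT}) y : pr2s (L :^ y) = pr2s L :^ y.2.
Proof.
apply/setP => x; apply/imsetP/idP => [[u Hu ->] | Hx].
  rewrite mem_conjg; apply/imsetP; exists (u ^ y^-1); first by rewrite -mem_conjg.
  by rewrite conjg_snd; case: y {Hu}.
move: Hx; rewrite mem_conjg => /imsetP[w Hw Ex]; exists (w ^ y); first by rewrite memJ_conjg.
by rewrite conjg_snd -Ex; case: y {Ex} => y1 y2 /=; rewrite conjgKV.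
Qed.

Lemma mem_diagm (C : {set gT}) (f : gT -> gT) x z :
  ((x, z) \in diagm C f) = (z \in C) && (x == f z).
Proof.
apply/imsetP/andP => [[c Hc [-> ->]] | [Hz /eqP ->]]; first by rewrite eqxx.
by exists z.
Qed.

Lemma pr1s_diagm (C : {set gT}) f : pr1s (diagm C f) = f @: C.
Proof.
apply/setP => x; apply/imsetP/imsetP => [[u /imsetP[c Hc ->] ->] | [c Hc ->]].
  by exists c.
by exists (f c, c) => //; apply/imsetP; exists c.
Qed.

Lemma pr2s_diagm (C : {set gT}) f : pr2s (diagm C f) = C.
Proof.
apply/setP => x; apply/imsetP/idP => [[u /imsetP[c Hc ->] ->] // | Hx].
by exists (f x, x) => //; apply/imsetP; exists x.
Qed.

Lemma pr1s_1 (L : {group gT * gT}) : 1 \in pr1s L.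
Proof. by apply/imsetP; exists 1. Qed.
Lemma pr2s_1 (L : {group gT * gT}) : 1 \in pr2s L.
Proof. by apply/imsetP; exists 1. Qed.

Lemma coset_one (J : {group gT}) (X Y : {set gT}) j :
  X \subset J -> Y \subset J -> 1 \in X -> 1 \in Y -> j \in J ->
  (X = J \/ Y = J) -> (X :* j) * Y = J.
Proof.
move=> sX sY X1 Y1 Hj [EX | EY].
  rewrite EX rcoset_id //; apply/eqP; rewrite eqEsubset mul_subG //=.
  exact: mulg_subl.
apply/eqP; rewrite eqEsubset; apply/andP; split.
  apply: mul_subG => //; apply/subsetP => x /rcosetP[x' Hx' ->].
  by rewrite groupM // (subsetP sX).
apply/subsetP => g Hg; rewrite -(mulKVg j g).
apply: mem_mulg; first by rewrite mem_rcoset mulgV.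
by rewrite EY groupM ?groupV.
Qed.
End X.
Section Alg.
Local Open Scope ring_scope.
Variables (gT : finGroupType) (R : comPzRingType).
Notation btT := (btype gT).
Notation muT := {ffun btT -> R}.

Definition sc (c : R) (x : muT) : muT := [ffun v => c * x v].

Lemma mulmuE (x y : muT) v :
  mulmu x y v = \sum_(t : btT) \sum_(u : btT) x t * y u * mulb R t u v.
Proof. by rewrite /mulmu sum_ffunE; apply: eq_bigr => t _; rewrite sum_ffunE; apply: eq_bigr => u _; rewrite ffunE. Qed.

Lemma bvecE (t v : btT) : bvec R t v = (v == t)%:R.
Proof. by rewrite ffunE. Qed.

Lemma mulmu_bvecl (t0 : btT) (y : muT) :
  mulmu (bvec R t0) y = \sum_(u : btT) sc (y u) (mulb R t0 u).
Proof.
apply/ffunP => v; rewrite mulmuE sum_ffunE (bigD1 t0) //=.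
rewrite [X in _ + X]big1 ?addr0.
  by apply: eq_bigr => u _; rewrite !ffunE eqxx mul1r.
by move=> t /negbTE Ht; apply: big1 => u _; rewrite bvecE Ht !mul0r.
Qed.

Lemma mulmu_bvecr (x : muT) (u0 : btT) :
  mulmu x (bvec R u0) = \sum_(t : btT) sc (x t) (mulb R t u0).
Proof.
apply/ffunP => v; rewrite mulmuE sum_ffunE; apply: eq_bigr => t _.
rewrite (bigD1 u0) //= big1 ?addr0.
  by rewrite !ffunE eqxx mulr1.
by move=> u /negbTE Hu; rewrite bvecE Hu mulr0 mul0r.
Qed.

Lemma mulmu_bvec2 (t0 u0 : btT) c :
  mulmu (bvec R t0) (sc c (bvec R u0)) = sc c (mulb R t0 u0).
Proof.
rewrite mulmu_bvecl (bigD1 u0) //= [X in _ + X]big1 ?addr0.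
  by rewrite ffunE bvecE eqxx mulr1.
by move=> u /negbTE Hu; apply/ffunP => v; rewrite !ffunE Hu mulr0 mul0r.
Qed.

Lemma mulmuDl (x x' y : muT) : mulmu (x + x') y = mulmu x y + mulmu x' y.
Proof.
apply/ffunP => v; rewrite ffunE !mulmuE -big_split; apply: eq_bigr => t _.
rewrite -big_split; apply: eq_bigr => u _; rewrite ffunE !mulrDl //.
Qed.

Lemma mulmu0l (y : muT) : mulmu 0 y = 0.
Proof.
apply/ffunP => v; rewrite mulmuE ffunE big1 // => t _; apply: big1 => u _.
by rewrite ffunE !mul0r.
Qed.

Lemma sc0 (x : muT) : sc 0 x = 0.
Proof. by apply/ffunP => v; rewrite !ffunE mul0r. Qed.
Lemma scx0 c : sc c 0 = 0.
Proof. by apply/ffunP => v; rewrite !ffunE mulr0. Qed.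

Lemma sum_ffun_nz (I : finType) (P : pred I) (F : I -> muT) v :
  (\sum_(i | P i) F i) v != 0 -> exists i, F i v != 0.
Proof.
rewrite sum_ffunE => H; apply/existsP; apply: contraNT H => /existsPn H.
by rewrite big1 // => i _; apply/eqP; move: (H i); rewrite negbK.
Qed.

Lemma ffun_decomp (x : muT) : x = \sum_(u : btT) sc (x u) (bvec R u).
Proof.
apply/ffunP => v; rewrite sum_ffunE (bigD1 v) //= big1 ?addr0.
  by rewrite !ffunE eqxx mulr1.
by move=> u /negbTE Hu; rewrite !ffunE eq_sym Hu mulr0.
Qed.

Lemma mulb_supp (t w u : btT) : mulb R t w u != 0 -> u.1.1 = t.1.1 /\ u.1.2 = w.1.2.
Proof.
case: t => [[B J] L]; case: w => [[J' A] M] /=; case: (J == J'); last by rewrite ffunE eqxx.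
case/sum_ffun_nz => D; rewrite bvecE; case: (boolP (u == _)) => [/eqP -> // | _].
by rewrite eqxx.
Qed.

Lemma repr_grp (J : {group gT}) : repr (J : {set gT}) = 1%g.
Proof. exact: repr_group. Qed.

Lemma mulb_one (B J A : {group gT}) (L M : {group gT * gT}) :
  (forall j, j \in J -> (pr2s L :* j * pr1s M)%g = J) ->
  mulb R (B, J, L) (J, A, M) = bcls R B A [group of <<bstar L (M :^ (1, 1))>>]%g.
Proof.
move=> H; rewrite /mulb eqxx.
have -> : [set (pr2s L :* j * pr1s M)%g | j in J] = [set (J : {set gT})].
  apply/setP => D; rewrite inE; apply/imsetP/eqP => [[j Hj ->] | ->]; first exact: H.
  by exists 1%g; rewrite ?H.
by rewrite big_set1 repr_grp invg1.
Qed.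

Lemma grp_conj_gen (L : {group gT * gT}) y : [group of <<(L :^ y)%g>>]%g = (L :^ y)%G.
Proof. by apply: val_inj; rewrite /= genGid. Qed.

Lemma conj_subJ (J : {group gT}) (X : {set gT}) g : X \subset J -> g \in J -> (X :^ g \subset J)%g.
Proof. by move=> sX Hg; rewrite sub_conjg conjGid ?groupV. Qed.

Lemma canon_diag (B A : {group gT}) :
  exists a b, [/\ a \in B, b \in A &
     canon B A [group of <<diagm B id>>]%G = diagm B id :^ (a, b) :> {set _}]%g.
Proof.
case: (canon_conj B A [group of <<diagm B id>>]%G) => -[a b] /setXP[Ha Hb] ->.
by exists a, b; split => //=; rewrite gen_diag.
Qed.

Lemma LUg (B A : {group gT}) (L : {group gT * gT}) : (pr1s L \subset B)%g ->
  mulb R (B, B, canon B B [group of <<diagm B id>>]%G) (B, A, L) = bvec R (B, A, canon B A L).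
Proof.
move=> sL; case: (canon_diag B B) => a [b [Ha Hb E]].
rewrite mulb_one; last first.
  move=> j Hj; apply: coset_one => //; rewrite ?pr1s_1 ?pr2s_1 //; last by left;
    rewrite E pr2s_conj pr2s_diagm /= conjGid.
  by rewrite E pr2s_conj pr2s_diagm /= conjGid.
rewrite /bcls E conjsg1 bstar_diagl // grp_conj_gen.
by rewrite (canon_uniq (L1 := L) (y := (b^-1 * a, 1)%g)) //; apply/setXP; split; rewrite /= ?groupM ?groupV ?group1.
Qed.

Lemma Pg (B J A : {group gT}) (L : {group gT * gT}) : (pr2s L \subset J)%g -> (J \subset A)%g ->
  mulb R (B, J, L) (J, A, canon J A [group of <<diagm J id>>]%G) = bvec R (B, A, canon B A L).
Proof.
move=> sL sJ; case: (canon_diag J A) => a [b [Ha Hb E]].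
rewrite mulb_one; last first.
  move=> j Hj; apply: coset_one => //; rewrite ?pr1s_1 ?pr2s_1 //; last by right;
    rewrite E pr1s_conj pr1s_diagm /= imset_id conjGid.
  by rewrite E pr1s_conj pr1s_diagm /= imset_id conjGid.
rewrite /bcls E conjsg1 bstar_diagr // grp_conj_gen.
by rewrite (canon_uniq (L1 := L) (y := (1, a^-1 * b)%g)) //; apply/setXP; split; rewrite /= ?groupM ?groupV ?group1 // (subsetP sJ).
Qed.
End Alg.

Section Fus.
Variable gT : finGroupType.
Local Open Scope ring_scope.
Local Open Scope group_scope.

Lemma restrE (P : {set gT}) (g : gT -> gT) x : x \in P -> restr P g x = g x.
Proof. by move=> Hx; rewrite /restr ffunE Hx. Qed.

Lemma imset_restr (P : {set gT}) (g : gT -> gT) : restr P g @: P = g @: P.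
Proof. by apply: eq_in_imset => x Hx; rewrite restrE. Qed.

Lemma conj_eqV (x y a : gT) : (x ^ a^-1 == y) = (x == y ^ a).
Proof. by apply/eqP/eqP => [<- | ->]; rewrite ?conjgKV ?conjgK. Qed.

Lemma graph_conj (E : fsys gT) (E0 C A B : {group gT}) (f : mor gT) a b :
  fusion_system E0 E -> E C f -> f @: C \subset B -> C \subset A -> A \subset E0 ->
  B \subset E0 -> a \in B -> b \in A ->
  exists (C' : {group gT}) (f' : mor gT),
    [/\ C' \subset A, E C' f', f' @: C' \subset B & diagm C f :^ (a, b) = diagm C' f'].
Proof.
move=> [_ Hconj _ Hcomp] ECf sfB sCA sAE sBE Ha Hb.
have sC'A : C :^ b \subset A by rewrite conj_subJ.
have EC'h1 : E (C :^ b)%G (cmap (C :^ b)%G b).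
  by apply: Hconj; [apply: subset_trans sAE | apply: (subsetP sAE)].
have sh1 : cmap (C :^ b)%G b @: (C :^ b)%G \subset C.
  apply/subsetP => y /imsetP[x Hx ->]; rewrite /cmap restrE //.
  by rewrite -mem_conjg.
have E2 := Hcomp _ _ _ _ EC'h1 ECf sh1.
have EQ : E (img f C) (cmap (img f C) a^-1).
  apply: Hconj; last by rewrite groupV (subsetP sBE).
  by rewrite gen_subG (subset_trans sfB).
have s2 : restr (C :^ b)%G (f \o cmap (C :^ b)%G b) @: (C :^ b)%G \subset img f C.
  apply/subsetP => y /imsetP[x Hx ->]; rewrite restrE //= /cmap restrE //.
  apply: mem_gen; apply/imsetP; exists (x ^ b^-1) => //; by rewrite -mem_conjg.
have E3 := Hcomp _ _ _ _ E2 EQ s2.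
set f' := restr _ _ in E3.
have f'E : forall x, x \in C :^ b -> f' x = f (x ^ b^-1) ^ a.
  move=> x Hx; rewrite /f' restrE //= restrE //= /cmap restrE // restrE ?invgK //.
  apply: mem_gen; apply/imsetP; exists (x ^ b^-1) => //; by rewrite -mem_conjg.
exists (C :^ b)%G, f'; split => //.
  apply/subsetP => y /imsetP[x Hx ->]; rewrite f'E // groupJ //.
  by apply: (subsetP sfB); apply/imsetP; exists (x ^ b^-1) => //; rewrite -mem_conjg.
apply/setP => -[x z]; rewrite mem_conj_pair !mem_diagm /= -mem_conjg.
case Hz: (z \in C :^ b) => //=; by rewrite f'E // conj_eqV.
Qed.

Lemma basis_canon (E : fsys gT) (E0 B A C : {group gT}) (L : {group gT * gT}) (f : mor gT) :
  fusion_system E0 E -> B \subset E0 -> A \subset E0 -> C \subset A -> E C f ->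
  f @: C \subset B -> L :=: diagm C f -> is_basis E E0 (B, A, canon B A L).
Proof.
move=> FE sB sA sCA ECf sfB EL; split => //; first by rewrite canon_id.
case: (canon_conj B A L) => -[a b] /setXP[Ha Hb] ->.
have [C' [f' [H1 H2 H3 H4]]] := graph_conj FE ECf sfB sCA sA sB Ha Hb.
by exists C', f'; split => //=; rewrite EL.
Qed.

Lemma noncentric_sub (S : {group gT}) (F : fsys gT) (C A : {group gT}) (f : mor gT) :
  fusion_system S F -> F C f -> f @: C \subset A -> ~ centric S F A -> ~ centric S F C.
Proof.
move=> [_ _ _ Hcomp] FCf sfA nA cC; apply: nA => g FAg.
have FCh := Hcomp _ _ _ _ FCf FAg sfA.
have := cC _ FCh; rewrite imset_restr imset_comp => H.
have sX : g @: (f @: C) \subset g @: A by apply: imsetS.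
apply: subset_trans (subset_trans _ H) sX.
by apply: setIS; apply: centS; apply: imsetS.
Qed.
End Fus.

Section P3.
Variables (gT : finGroupType) (R : comPzRingType) (S H : {group gT}) (F : fsys gT).
Hypotheses (FS : fusion_system S F) (sHS : H \subset S).
Local Open Scope ring_scope.
Local Open Scope group_scope.

Lemma morph1' (D : {group gT}) (f : gT -> gT) : {in D &, {morph f : x y / x * y}} -> f 1 = 1.
Proof.
move=> fM; have := fM 1 1 (group1 D) (group1 D); rewrite mulg1 => /esym E.
by apply: (mulgI (f 1)); rewrite mulg1.
Qed.

Lemma morphV' (D : {group gT}) (f : gT -> gT) : {in D &, {morph f : x y / x * y}} ->
  {in D, {morph f : x / x^-1}}.
Proof.
move=> fM x Hx; apply: (mulgI (f x)); rewrite mulgV -fM ?groupV // mulgV.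
exact: morph1' fM.
Qed.

Lemma morphJ' (D : {group gT}) (f : gT -> gT) : {in D &, {morph f : x y / x * y}} ->
  {in D &, forall x y, f (x ^ y) = f x ^ f y}.
Proof.
move=> fM x y Hx Hy; rewrite /conjg !fM ?groupV ?groupM // (morphV' fM).
  by rewrite mulgA.
all: done.
Qed.

Lemma image_group (D : {group gT}) (f : gT -> gT) : {in D &, {morph f : x y / x * y}} ->
  group_set (f @: D).
Proof.
move=> fM; apply/group_setP; split.
  by apply/imsetP; exists 1 => //; rewrite (morph1' fM).
move=> x y /imsetP[x' Hx' ->] /imsetP[y' Hy' ->]; rewrite -fM //.
by apply/imsetP; exists (x' * y') => //; rewrite groupM.
Qed.

Lemma diag_conj (X : {set gT}) (y1 y2 : gT) :
  diagm X id :^ (y1, y2) = [set (e ^ y1, e ^ y2) | e in X].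
Proof.
apply/setP => -[x z]; rewrite mem_conj_pair mem_diag; apply/andP/imsetP.
  case=> /eqP E Hz; exists (z ^ y2^-1) => //; congr pair; last by rewrite conjgKV.
  by rewrite -E conjgKV.
by case=> e He [-> ->]; rewrite !conjgK eqxx.
Qed.


Lemma minvK (phi : mor gT) : {in H &, injective phi} ->
  forall x, x \in H -> minv H phi (phi x) = x.
Proof.
move=> inj x Hx; rewrite /minv restrE; last by apply/imsetP; exists x.
case: pickP => [x' /andP[Hx' /eqP E] | /(_ x)] /=; first by apply: inj.
by rewrite Hx eqxx.
Qed.

Lemma part3 (phi : mor gT) (L : zmodType) (actL : mu gT R -> L -> L) :
  F H phi -> mcentric S F H actL -> mcentric S F (img phi H) (conj_act H phi actL).
Proof.
move=> FHphi CL A sA nA m; rewrite /conj_act.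
have FS' := FS; case: FS' => [Hmor Hconj _ Hcomp].
case: (Hmor _ _ FHphi) => _ _ phiM phiI _.
set f := minv H phi.
have gD := image_group phiM.
have sAD : A \subset phi @: H by move: sA; rewrite /img /= gen_set_id.
have fK : forall x, x \in H -> f (phi x) = x by exact: minvK.
have fM : {in (group gD) &, {morph f : x y / x * y}}.
  move=> y1 y2 /imsetP[x1 Hx1 ->] /imsetP[x2 Hx2 ->].
  by rewrite -phiM // !fK ?groupM.
have fMA : {in A &, {morph f : x y / x * y}}.
  by move=> y1 y2 H1 H2; apply: fM; apply: (subsetP sAD).
have gA' := image_group fMA.
have EA' : (img f A : {set gT}) = f @: A by rewrite /img /= gen_set_id.
have sA'H : f @: A \subset H.
  apply/subsetP => x /imsetP[y Hy ->].
  by case/imsetP: (subsetP sAD y Hy) => x' Hx' ->; rewrite fK.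
have phifK : forall y, y \in A -> phi (f y) = y.
  by move=> y Hy; case/imsetP: (subsetP sAD y Hy) => x' Hx' ->; rewrite fK.
have [a [b [Ha Hb EK]]] := canon_diag A A.
set K0 := canon A A _ in EK.
have EL : imgL f K0 = ([group of <<diagm (img f A) id>>] :^ (f a, f b))%G.
  apply: val_inj; rewrite /= -genJ; congr <<_>>.
  rewrite EK diag_conj EA' diag_conj -imset_comp -imset_comp.
  by apply: eq_in_imset => d Hd /=; rewrite !(morphJ' fMA).
have Etr : transport f (Iaa R A) = Iaa R (img f A).
  apply/ffunP => v; rewrite /transport sum_ffunE (bigD1 (A, A, K0)) //=.
  rewrite [X in _ + X]big1 ?addr0.
    rewrite !ffunE /Iaa /bcls -/K0 eqxx mul1r.
    rewrite (canon_uniq (L1 := [group of <<diagm (img f A) id>>]%G) (y := (f a, f b))) //.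
    by apply/setXP; split; apply: mem_gen; apply/imsetP; [exists a | exists b].
  by move=> t /negbTE Ht; rewrite !ffunE /Iaa /bcls -/K0 Ht mul0r.
rewrite Etr; apply: CL; first by rewrite EA'.
have sA'S : img f A \subset S by rewrite EA' (subset_trans sA'H).
have F1 := Hconj _ 1 sA'S (group1 S).
have s1 : cmap (img f A) 1 @: img f A \subset H.
  apply/subsetP => x /imsetP[y Hy ->]; rewrite /cmap restrE // invg1 conjg1.
  by move: Hy; rewrite EA' => /(subsetP sA'H).
apply: (noncentric_sub FS (Hcomp _ _ _ _ F1 FHphi s1)) nA.
apply/subsetP => x /imsetP[y Hy ->]; rewrite restrE //= /cmap restrE // invg1 conjg1.
by move: Hy; rewrite EA' => /imsetP[z Hz ->]; rewrite phifK.
Qed.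
End P3.

Section P2a.
Variables (gT : finGroupType) (R : comPzRingType).
Local Open Scope ring_scope.
Notation btT := (btype gT).
Notation muT := {ffun btT -> R}.

Lemma mulmu_sc c (x y : muT) : mulmu (sc c x) y = sc c (mulmu x y).
Proof.
apply/ffunP => v; rewrite ffunE !mulmuE mulr_sumr; apply: eq_bigr => t _.
rewrite mulr_sumr; apply: eq_bigr => u _; by rewrite ffunE !mulrA.
Qed.

Lemma mulmuDr (x y y' : muT) : mulmu x (y + y') = mulmu x y + mulmu x y'.
Proof.
apply/ffunP => v; rewrite ffunE !mulmuE -big_split; apply: eq_bigr => t _.
rewrite -big_split; apply: eq_bigr => u _; by rewrite ffunE mulrDr mulrDl.
Qed.

Lemma mulmu0r (x : muT) : mulmu x 0 = 0.
Proof.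
apply/ffunP => v; rewrite mulmuE ffunE big1 // => t _; apply: big1 => u _.
by rewrite ffunE mulr0 mul0r.
Qed.

Lemma mulmu_sumr (I : finType) (P : pred I) (x : muT) (Y : I -> muT) :
  mulmu x (\sum_(i | P i) Y i) = \sum_(i | P i) mulmu x (Y i).
Proof. exact: (big_morph (mulmu x) (mulmuDr x) (mulmu0r x)). Qed.

Lemma mulmu_bb (t u : btT) : mulmu (bvec R t) (bvec R u) = mulb R t u.
Proof.
rewrite mulmu_bvecl (bigD1 u) //= [X in _ + X]big1 ?addr0.
  by apply/ffunP => v; rewrite ffunE bvecE eqxx mul1r.
by move=> w /negbTE Hw; apply/ffunP => v; rewrite !ffunE Hw mul0r.
Qed.

Lemma RU (H B A : {group gT}) (L : {group gT * gT}) : (A \subset H)%g -> (pr2s L \subset A)%g ->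
  mulmu (bvec R (B, A, L)) (unitmu R H) = bvec R (B, A, canon B A L).
Proof.
move=> sAH sL; rewrite /unitmu mulmu_sumr (bigD1 A) //= [X in _ + X]big1 ?addr0.
  by rewrite /Iaa /bcls mulmu_bb Pg.
move=> A' /andP[_ HA']; rewrite /Iaa /bcls mulmu_bb /mulb.
by rewrite eq_sym (negbTE HA').
Qed.

Lemma in_mu_bvec (E : fsys gT) (E0 : {group gT}) t c :
  is_basis E E0 t -> in_mu E E0 (sc c (bvec R t)).
Proof.
move=> Bt u; rewrite !ffunE; case: (boolP (u == t)) => [/eqP -> // | _].
by rewrite mulr0 eqxx.
Qed.

Lemma in_mu_bvec1 (E : fsys gT) (E0 : {group gT}) t :
  is_basis E E0 t -> in_mu E E0 (bvec R t).
Proof.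
move=> Bt u; rewrite !ffunE; case: (boolP (u == t)) => [/eqP -> // | _].
by rewrite eqxx.
Qed.

Lemma in_mu_add (E : fsys gT) (E0 : {group gT}) (x y : muT) :
  in_mu E E0 x -> in_mu E E0 y -> in_mu E E0 (x + y).
Proof.
move=> Hx Hy u; rewrite ffunE; case: (boolP (x u == 0)) => [/eqP -> | Hxu _]; last exact: Hx Hxu.
by rewrite add0r; apply: Hy.
Qed.

Lemma in_mu_0 (E : fsys gT) (E0 : {group gT}) : in_mu E E0 (0 : muT).
Proof. by move=> u; rewrite ffunE eqxx. Qed.

Lemma in_mu_Iaa (E : fsys gT) (E0 A : {group gT}) :
  fusion_system E0 E -> (A \subset E0)%g -> in_mu E E0 (Iaa R A).
Proof.
move=> FE sA; have FE' := FE; case: FE' => [_ Hconj _ _].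
apply: in_mu_bvec1; apply: (basis_canon (f := cmap A 1%g) FE sA sA (subxx _)).
- exact: Hconj sA (group1 _).
- apply/subsetP => x /imsetP[y Hy ->]; by rewrite /cmap restrE // invg1 conjg1.
- rewrite /= gen_diag; apply: eq_in_imset => y Hy.
  by rewrite /cmap restrE // invg1 conjg1.
Qed.

Lemma in_mu1_add (FK : fsys gT) (K H : {group gT}) (x y : muT) :
  in_mu1 FK K H x -> in_mu1 FK K H y -> in_mu1 FK K H (x + y).
Proof.
move=> [Hx [x' [Hx' Ex]]] [Hy [y' [Hy' Ey]]]; split; first exact: in_mu_add.
by exists (x' + y'); split; [apply: in_mu_add | rewrite mulmuDl -Ex -Ey].
Qed.

Lemma in_mu1_0 (FK : fsys gT) (K H : {group gT}) : in_mu1 FK K H (0 : muT).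
Proof.
split; first exact: in_mu_0.
by exists 0; split; [apply: in_mu_0 | rewrite mulmu0l].
Qed.

Lemma sumR_nz (I : finType) (P : pred I) (F : I -> R) :
  \sum_(i | P i) F i != 0 -> exists i, P i /\ F i != 0.
Proof.
move=> H; have : [exists i, P i && (F i != 0)].
  apply: contraNT H => /existsPn Hn; rewrite big1 // => i Pi.
  by move: (Hn i); rewrite Pi /= negbK => /eqP.
by case/existsP => i /andP[Pi Fi]; exists i.
Qed.
End P2a.

Section P2.
Variables (gT : finGroupType) (R : comPzRingType) (S H K : {group gT}) (F FH FK : fsys gT).
Hypotheses (FS : fusion_system S F) (sHK : (H \subset K)%g) (sKS : (K \subset S)%g)
  (FHs : fusion_system H FH) (FKs : fusion_system K FK)
  (sFHK : subfs FH FK) (sFKF : subfs FK F).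
Local Open Scope ring_scope.
Notation btT := (btype gT).
Notation muT := {ffun btT -> R}.

Lemma supp1 (y : muT) u : in_mu1 FK K H y -> y u != 0 -> (u.1.2 \subset H)%g.
Proof.
move=> [_ [x [_ ->]]]; rewrite mulmuE => /sumR_nz[t [_ /sumR_nz[w [_ Hw]]]].
have Hm : mulb R t w u != 0 by apply: contraNneq Hw => ->; rewrite mulr0.
have H1 : unitmu R H w != 0 by apply: contraNneq Hw => ->; rewrite mulr0 mul0r.
case: (mulb_supp Hm) => _ ->.
move: H1; rewrite /unitmu sum_ffunE => /sumR_nz[A' [sA' HA']].
move: HA'; rewrite /Iaa /bcls bvecE; case: (boolP (w == _)) => [/eqP -> // | _].
by rewrite eqxx.
Qed.

Variables (N : zmodType) (actN : mu gT R -> N -> N) (T : zmodType) (beta : mu gT R -> N -> T).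
Hypotheses (MN : mack_module FH H actN) (CN : mcentric S F H actN)
  (BAL : balanced FK FH K H actN beta).

Lemma beta0l n : beta 0 n = 0.
Proof.
case: BAL => B1 _ _; have := B1 0 0 n (in_mu1_0 R _ _ _) (in_mu1_0 R _ _ _).
rewrite addr0 => E; have := congr1 (fun t => t - beta 0 n) E.
by rewrite /= subrr addrK => ->.
Qed.

Lemma beta0r y : in_mu1 FK K H y -> beta y 0 = 0.
Proof.
case: BAL => _ B2 _ Hy; have := B2 y 0 0 Hy.
rewrite addr0 => E; have := congr1 (fun t => t - beta y 0) E.
by rewrite /= subrr addrK => ->.
Qed.

Lemma term (A : {group gT}) (u : btT) c n :
  (A \subset K)%g -> ~ centric S F A -> is_basis FK K u -> u.1.1 = A -> (u.1.2 \subset H)%g ->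
  in_mu1 FK K H (sc c (bvec R u)) /\ beta (sc c (bvec R u)) n = 0.
Proof.
case: u => [[B Au] Lu] sAK nA Bu; have Bu' := Bu.
move: Bu' => /= [sBK sAuK ELu [C [f [sCAu FKCf sfB ELf]]]] EB sAuH.
subst B.
have sCH : (C \subset H)%g := subset_trans sCAu sAuH.
have sCK : (C \subset K)%g := subset_trans sCH sHK.
set v' := (A, C, canon A C Lu).
set z := sc c (bvec R (C, Au, canon C Au [group of <<diagm C id>>]%G)).
have ELf' : Lu :=: diagm C f by rewrite ELf.
have bv' : is_basis FK K v' := basis_canon FKs sAK sCK (subxx _) FKCf sfB ELf'.
have FHs' := FHs; case: FHs' => [_ HconjH _ _].
have bz : is_basis FH H (C, Au, canon C Au [group of <<diagm C id>>]%G).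
  apply: (basis_canon (f := cmap C 1%g) FHs sCH sAuH sCAu).
  - exact: HconjH sCH (group1 _).
  - apply/subsetP => x /imsetP[y Hy ->]; by rewrite /cmap restrE // invg1 conjg1.
  - rewrite /= gen_diag; apply: eq_in_imset => y Hy.
    by rewrite /cmap restrE // invg1 conjg1.
have [[a cc] /setXP[Ha Hc] Ecan] := canon_conj A C Lu.
have pv' : (pr2s (canon A C Lu) \subset C)%g.
  by rewrite Ecan /= pr2s_conj ELf pr2s_diagm /= conjGid.
have v'1 : in_mu1 FK K H (bvec R v').
  split; first exact: in_mu_bvec1.
  exists (bvec R v'); split; first exact: in_mu_bvec1.
  by rewrite RU // canon_id.
have Pz : mulmu (bvec R v') z = sc c (bvec R (A, Au, Lu)).
  rewrite mulmu_bvec2 Pg //; congr sc; congr bvec; congr pair.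
  transitivity (canon A Au Lu); last by rewrite -ELu.
  rewrite Ecan (canon_uniq (L1 := Lu) (y := (a, cc))) //.
  by apply/setXP; split => //=; apply: (subsetP sCAu).
have [a' [b' [Ha' Hb' Ez]]] := canon_diag C Au.
have Lz : mulmu (Iaa R C) z = z.
  rewrite /Iaa /bcls mulmu_bvec2 LUg ?canon_id //.
  by rewrite Ez pr1s_conj pr1s_diagm imset_id /= conjGid.
have nC : ~ centric S F C := noncentric_sub FS (sFKF FKCf) sfB nA.
have az : actN z n = 0.
  case: MN => _ _ _ M4 _.
  rewrite -Lz M4; first exact: CN.
  - exact: in_mu_Iaa FHs sCH.
  - exact: in_mu_bvec.
split.
  split; first exact: in_mu_bvec Bu.
  exists (sc c (bvec R (A, Au, Lu))); split; first exact: in_mu_bvec Bu.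
  rewrite mulmu_sc RU //; first by rewrite -ELu.
  by rewrite ELf pr2s_diagm.
case: BAL => _ _ B3.
by rewrite -Pz B3 // ?az ?beta0r //; exact: in_mu_bvec.
Qed.

Lemma key (A : {group gT}) (y : muT) n :
  (A \subset K)%g -> ~ centric S F A -> in_mu1 FK K H y -> beta (mulmu (Iaa R A) y) n = 0.
Proof.
move=> sAK nA Hy.
rewrite /Iaa /bcls mulmu_bvecl.
set tA := (A, A, _).
pose P w := in_mu1 FK K H w /\ beta w n = 0.
have P0 : P 0 by split; [exact: in_mu1_0 | exact: beta0l].
suff : P (\sum_u sc (y u) (mulb R tA u)) by case.
apply: big_ind => //.
  move=> w1 w2 [H1 E1] [H2 E2]; split; first exact: in_mu1_add.
  by case: BAL => B1 _ _; rewrite B1 // E1 E2 addr0.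
move=> u _; case: (boolP (y u == 0)) => [/eqP -> | nz]; first by rewrite sc0.
have Bu : is_basis FK K u := Hy.1 u nz.
have sH := supp1 Hy nz.
case: u Bu sH nz => [[B Au] Lu] Bu sH nz.
have [sBK sAuK ELu [C [f [sCAu FKCf sfB ELf]]]] := Bu.
case: (eqVneq A B) => [EAB | NAB].
  subst B; rewrite LUg; last by rewrite ELf pr1s_diagm.
  rewrite -ELu /P; apply: (term (A := A)) => //.
by rewrite /tA /mulb /= (negbTE NAB) scx0.
Qed.

Lemma part2 (actT : mu gT R -> T -> T) :
  is_tensor FK FH K H actN beta -> induced_act FK K H beta actT -> mcentric S F K actT.
Proof.
move=> [_ UNI] [IA1 IA2] A sAK nA m.
have bal0 : balanced FK FH K H actN (fun (_ : muT) (_ : N) => (0 : T)).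
  by split => *; rewrite ?addr0.
have [h [hm hbeta huniq]] := UNI T _ bal0.
have iA : in_mu FK K (Iaa R A) := in_mu_Iaa FKs sAK.
have e1 := huniq (actT (Iaa R A)) (fun a b => IA1 _ a b iA) (fun y n Hy => etrans (IA2 _ _ _ iA Hy) (key n sAK nA Hy)).
have e2 := huniq (fun _ => 0) (fun a b => esym (addr0 0)) (fun y n Hy => erefl).
by rewrite e1 -e2.
Qed.
End P2.

End Helpers.
Import Helpers.

Theorem proposition2p30 (gT : finGroupType) (p : nat) (S : {group gT}) (F : fsys gT)
    (R : comPzRingType) (H K : {group gT}) (FH FK : fsys gT) :
  prime p -> p.-group S -> fusion_system S F -> saturated p S F ->
  H \subset K -> K \subset S -> fusion_system H FH -> fusion_system K FK ->
  subfs FH FK -> subfs FK F ->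
  [/\ (* (1) restriction *)
      (forall (M : zmodType) (act : mu gT R -> M -> M),
         mack_module FK K act -> mcentric S F K act ->
         forall A : {group gT}, A \subset H -> ~ centric S F A ->
         forall m, act (Iaa R A) (act (unitmu R H) m) = 0%R),
      (* (2) induction *)
      (forall (N : zmodType) (actN : mu gT R -> N -> N) (T : zmodType)
              (beta : mu gT R -> N -> T) (actT : mu gT R -> T -> T),
         mack_module FH H actN -> mcentric S F H actN ->
         is_tensor FK FH K H actN beta -> induced_act FK K H beta actT ->
         mcentric S F K actT) &
      (* (3) conjugation *)
      (forall (phi : mor gT) (L : zmodType) (actL : mu gT R -> L -> L),
         F H phi -> mack_module (group_fs H) H actL -> mcentric S F H actL ->
         mcentric S F (img phi H) (conj_act H phi actL))].
Proof.
move=> _ _ FS _ sHK sKS FHs FKs sFHK sFKF; split.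
- move=> M act _ CM A sAH nA m.
  exact: CM A (subset_trans sAH sHK) nA _.
- move=> N actN T beta actT MN CN TEN IND.
  have BAL := TEN.1.
  exact: (part2 FS sHK FHs FKs sFKF MN CN BAL TEN IND).
- move=> phi L actL FHphi _ CL.
  exact: (part3 FS (subset_trans sHK sKS) FHphi CL).
Qed.
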